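(* Let $N\ge 2$ and let $K=\{x\in\mathbb{R}^N : x_i^2+x_{i+1}^2\le 1\ \text{for all } 1\le i\le N-1\}$. For every subset $I\subset\{2,\dots,N-2\}$ containing no two consecutive integers, let $$K_I=\{x\in K : x_i^2+x_{i+1}^2=1 \text{ for } i\in\{1,\dots,N-1\}\setminus I,\ \ x_i^2+x_{i+1}^2<1\text{ for } i\in I\}.$$ Then the set of extreme points of $K$ is $\bigcup_I K_I$, the union running over all subsets $I\subset\{2,\dots,N-2\}$ with no two consecutive elements. *)

(* Defs.v *)
From HB Require Import structures.
From mathcomp Require Import all_boot all_order all_algebra.
From mathcomp Require Import reals.
Set Implicit Arguments. Unset Strict Implicit. Unset Printing Implicit Defensive.
Import Order.TTheory GRing.Theory Num.Theory.
Local Open Scope ring_scope.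

(* 0-based coordinate access: coord x i = x_(i+1) in the paper's 1-based
   indexing when i < N, and 0 (irrelevant) otherwise. *)
Definition coord (R : realType) (N : nat) (x : 'rV[R]_N) (i : nat) : R :=
  if insub i is Some j then x ord0 j else 0.

Definition q (R : realType) (N : nat) (x : 'rV[R]_N) (i : nat) : R :=
  coord x i ^+ 2 + coord x i.+1 ^+ 2.

Definition inK (R : realType) (N : nat) (x : 'rV[R]_N) : Prop :=
  forall i : nat, (i.+1 < N)%N -> q x i <= 1.

Definition extreme_point (R : realType) (N : nat) (S : 'rV[R]_N -> Prop)
  (x : 'rV[R]_N) : Prop :=
  S x /\ forall (y z : 'rV[R]_N) (t : R), S y -> S z -> 0 < t -> t < 1 ->
    x = t *: y + (1 - t) *: z -> y = z.

(* Admissible index sets, 0-based: the paper's I ⊂ {2,...,N-2} (1-based pair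
   indices) becomes I ⊂ {1,...,N-3}, with no two consecutive elements. *)
Definition admissible (N : nat) (I : nat -> bool) : Prop :=
  (forall i, I i -> (1 <= i)%N /\ (i.+3 <= N)%N) /\
  (forall i, I i -> ~~ I i.+1).

Definition inKI (R : realType) (N : nat) (I : nat -> bool) (x : 'rV[R]_N) : Prop :=
  inK x /\
  forall i : nat, (i.+1 < N)%N ->
    (I i -> q x i < 1) /\ (~~ I i -> q x i = 1).

(* Main.v *)
Require Import Defs.
From HB Require Import structures.
From mathcomp Require Import all_boot all_order all_algebra.
From mathcomp Require Import reals.
From mathcomp Require Import ring lra zify.
Import Order.TTheory GRing.Theory Num.Theory.
Local Open Scope ring_scope.

Lemma disk (R : realType) (a b c d e f t : R) :
  a = t * c + (1 - t) * e -> b = t * d + (1 - t) * f ->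
  a ^+ 2 + b ^+ 2 = 1 -> c ^+ 2 + d ^+ 2 <= 1 -> e ^+ 2 + f ^+ 2 <= 1 ->
  0 < t -> t < 1 -> c = e /\ d = f.
Proof.
move=> ha hb h1 hc he t0 t1.
have key : t * (1 - t) * ((c - e) ^+ 2 + (d - f) ^+ 2) =
   t * (c ^+ 2 + d ^+ 2) + (1 - t) * (e ^+ 2 + f ^+ 2) - (a ^+ 2 + b ^+ 2).
  by rewrite ha hb; ring.
have tp : 0 < t * (1 - t) by apply: mulr_gt0; lra.
have hD : (c - e) ^+ 2 + (d - f) ^+ 2 <= 0.
  rewrite -(pmulr_rle0 _ tp) key h1; nra.
have s1 : 0 <= (c - e) ^+ 2 by apply: sqr_ge0.
have s2 : 0 <= (d - f) ^+ 2 by apply: sqr_ge0.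
have e1 : (c - e) ^+ 2 = 0 by lra.
have e2 : (d - f) ^+ 2 = 0 by lra.
move/eqP: e1; rewrite sqrf_eq0 subr_eq0 => /eqP ->.
by move/eqP: e2; rewrite sqrf_eq0 subr_eq0 => /eqP ->.
Qed.

Lemma coordE (R : realType) N (x : 'rV[R]_N) (k : 'I_N) : Defs.coord x k = x ord0 k.
Proof. by rewrite /Defs.coord valK. Qed.

Lemma coord_out (R : realType) N (x : 'rV[R]_N) i : (N <= i)%N -> Defs.coord x i = 0.
Proof. by move=> h; rewrite /Defs.coord insubF // ltnNge h. Qed.

Lemma coordL (R : realType) N (y z : 'rV[R]_N) a b i :
  Defs.coord (a *: y + b *: z) i = a * Defs.coord y i + b * Defs.coord z i.
Proof.
have [hi|hi] := ltnP i N; last by rewrite !coord_out // !mulr0 addr0.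
by rewrite -[i]/(nat_of_ord (Ordinal hi)) !coordE !mxE.
Qed.

Lemma bump (R : realType) (a b d s : R) :
  a ^+ 2 + b ^+ 2 + s <= 1 -> 0 < s -> s <= 1 -> - s <= 3 * d -> 3 * d <= s ->
  (a + d) ^+ 2 + b ^+ 2 <= 1.
Proof.
move=> h s0 s1 d1 d2.
have hb : 0 <= b ^+ 2 by apply: sqr_ge0.
have ha : a ^+ 2 <= 1 by lra.
have ha1 : a <= 1 by nra.
have ha2 : -1 <= a by nra.
have hd : d ^+ 2 <= s / 9 by nra.
have had : 2 * a * d <= 2 * s / 3 by nra.
nra.
Qed.

Lemma q_ge0 (R : realType) N (x : 'rV[R]_N) i : 0 <= q x i.
Proof. by rewrite /q addr_ge0 // sqr_ge0. Qed.
Arguments q_ge0 {R N} x i.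

Lemma extreme_of_cover (R : realType) N (x : 'rV[R]_N) : inK x ->
  (forall k, (k < N)%N -> exists i, (i.+1 < N)%N /\ (i = k \/ i.+1 = k) /\ q x i = 1) ->
  extreme_point (@inK R N) x.
Proof.
move=> hx cov; split => // y z t hy hz t0 t1 hxe.
apply/matrixP => a k; rewrite (ord1 a).
have [i [hi [hik hq]]] := cov k (ltn_ord k).
have e1 := congr1 (fun v => Defs.coord v i) hxe.
have e2 := congr1 (fun v => Defs.coord v i.+1) hxe.
rewrite /= coordL in e1; rewrite /= coordL in e2.
have [c1 c2] := @disk R _ _ _ _ _ _ _ e1 e2 hq (hy i hi) (hz i hi) t0 t1.
by case: hik => ek; rewrite -!coordE -ek.
Qed.

Lemma not_extreme (R : realType) N (x : 'rV[R]_N) j : inK x -> (j < N)%N ->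
  (forall i, (i.+1 < N)%N -> (i = j \/ i.+1 = j) -> q x i < 1) ->
  ~ extreme_point (@inK R N) x.
Proof.
move=> hx hj unc [_ ext].
pose sa : R := if (0 < j)%N then 1 - q x j.-1 else 1.
pose sb : R := if (j.+1 < N)%N then 1 - q x j else 1.
have sa0 : 0 < sa.
  rewrite /sa; case: ifP => // h; rewrite subr_gt0; apply: unc; last by right; rewrite prednK.
  by rewrite prednK.
have sb0 : 0 < sb.
  rewrite /sb; case: ifP => // h; rewrite subr_gt0; apply: unc => //; by left.
have sa1 : sa <= 1 by rewrite /sa; case: ifP => _; [have := q_ge0 x j.-1; lra | lra].
have sb1 : sb <= 1 by rewrite /sb; case: ifP => _; [have := q_ge0 x j; lra | lra].
pose p := sa * sb.
have p0 : 0 < p by apply: mulr_gt0.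
have pa : p <= sa by rewrite /p; nra.
have pb : p <= sb by rewrite /p; nra.
pose e : 'rV[R]_N := \row_(k < N) ((val k == j)%:R : R).
have ce : forall i, Defs.coord e i = (i == j)%:R.
  move=> i; have [hi|hi] := ltnP i N.
    by rewrite -[i]/(nat_of_ord (Ordinal hi)) coordE mxE.
  rewrite coord_out //; case: eqP => // eij; move: hi; rewrite eij leqNgt hj //.
pose y d := 1 *: x + d *: e.
have cy : forall d i, Defs.coord (y d) i = Defs.coord x i + d * (i == j)%:R.
  by move=> d i; rewrite coordL ce mul1r.
have inKy : forall d, - p <= 3 * d -> 3 * d <= p -> inK (y d).
  move=> d d1 d2 i hi; rewrite /q !cy.
  case: (eqVneq i j) => [eij|nij].
    rewrite eij; rewrite ?eqxx (gtn_eqF (ltnSn j)) mulr1 mulr0 addr0.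
    apply: (@bump R _ _ _ sb); rewrite // ?(le_trans _ d2) ?(le_trans d1) //; try lra.
    rewrite /sb -eij hi; have := hx i hi; rewrite /q; lra.
  rewrite mulr0 addr0.
  case: (eqVneq i.+1 j) => [eij|nij2]; last first.
    by rewrite mulr0 addr0; apply: hx.
  rewrite eij ?eqxx mulr1 addrC.
  apply: (@bump R _ _ _ sa); rewrite // ?(le_trans _ d2) ?(le_trans d1) //; try lra.
  rewrite /sa -eij /=; have := hx i hi; rewrite /q; lra.
have p3 : 3 * (p / 3) = p by field.
have hyp : inK (y (p / 3)) by apply: inKy; lra.
have hym : inK (y (- (p / 3))) by apply: inKy; lra.
have := ext _ _ (2^-1) hyp hym.
have h2 : (0 : R) < 2^-1 by rewrite invr_gt0.
have h2' : (2^-1 : R) < 1 by rewrite invf_lt1 //; lra.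
move=> /(_ h2 h2') H.
have : (p / 3) = 0.
  have E : y (p / 3) = y (- (p / 3)).
    apply: H; apply/matrixP => a b; rewrite !mxE; field; lra.
  have := congr1 (fun v => Defs.coord v j) E; rewrite /= !cy eqxx !mulr1; lra.
lra.
Qed.

Theorem mainTheorem6 (R : realType) (N : nat) (hN : (2 <= N)%N) (x : 'rV[R]_N) :
  extreme_point (@inK R N) x <-> exists I : nat -> bool, admissible N I /\ inKI I x.
Proof.
split.
- move=> hext; have hx := hext.1.
  exists (fun i => (i.+1 < N)%N && (q x i < 1)); split; [split|].
  + move=> i /andP[hi hq]; split.
      case: i hi hq => [|i] hi hq //; exfalso.
      apply: (@not_extreme R N x 0) => //; first by move: hN; lia.
      by move=> [|i'] hi' [] // _.
    rewrite leqNgt; apply/negP => hN3; apply: (@not_extreme R N x i.+1) => //.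
    move=> i' hi' [e|e]; last by case: e => ->.
    exfalso; subst i'; move: hi' hN3; lia.
  + move=> i /andP[hi hq]; apply/negP => /andP[hi2 hq2].
    apply: (@not_extreme R N x i.+1) => //.
    by move=> i' _ [->|[->]].
  + split => // i hi; split; first by case/andP.
    rewrite hi /= -leNgt => h; apply/eqP; by rewrite eq_le (hx i hi) h.
- move=> [I [[h1 h2] [hx hI]]]; apply: extreme_of_cover => // k hk.
  case: k hk => [|k] hk.
    exists 0%N; split => //; split; first by left.
    by apply: (hI 0%N hN).2; apply/negP => /h1 [].
  case E: (I k).
    have [_ h3] := h1 k E.
    exists k.+1; split => //; split; first by left.
    by apply: (hI k.+1 h3).2; apply: h2.
  exists k; split => //; split; first by right.
  by apply: (hI k hk).2; rewrite E.
Qed.
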